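(* Let $k\ge 2$, $n\ge 3$, $M=\{0,1,\dots,k-1\}$, and consider the positions $p\in M^n$ with the moves and the notation $B(p)$, $\bar x$, $T(m;j_1,\dots,j_{n-m})$ described in the context. (1) $M^n$ is the disjoint union of the trivial classes $(m)=\{p: |B(p)|=m\}$, $0\le m\le n$. (2) The sets $T(m;j_1,\dots,j_{n-m})$, for $1\le m\le n$ and integers $1\le j_1\le\dots\le j_{n-m}\le\lfloor (k-1)/2\rfloor$, are pairwise disjoint and cover all external positions. If it is not the case that ($m=1$ and $j_1<j_2<\dots<j_{n-1}<(k-1)/2$), then $T(m;j_1,\dots,j_{n-m})$ is exactly one connectivity class. If $m=1$ and $j_1<j_2<\dots<j_{n-1}<(k-1)/2$ (here $(k-1)/2$ need not be an integer), then $T(1;j_1,\dots,j_{n-1})$ is the union of exactly two connectivity classes: the set of its positions connected to $(0,j_1,\dots,j_{n-1})$, and the set of its positions not connected to it (which contains $(k-1,j_1,\dots,j_{n-1})$). Moreover, integers $1\le j_1<\dots<j_{n-1}<(k-1)/2$ exist only if $k\ge 2n$.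
   Context: Fix integers $k\ge 2$ (edge length) and $n\ge 3$ (dimension), $M=\{0,\dots,k-1\}$. A position is $p=(p_1,\dots,p_n)\in M^n$; the cubie in position $p$ occupies $\prod_i[p_i,p_i+1]\subset[0,k]^n$. Let $B(p)=\{i: p_i\in\{0,k-1\}\}$; $p$ is external if $B(p)\neq\emptyset$. For distinct $i,j\in\{1,\dots,n\}$ define $\psi_{i,j}:M^n\to M^n$ by $(\psi_{i,j}p)_i=k-1-p_j$, $(\psi_{i,j}p)_j=p_i$, $(\psi_{i,j}p)_l=p_l$ for $l\notin\{i,j\}$. A move is given by distinct $i,j$ and constants $c_l\in M$ ($l\notin\{i,j\}$): it sends every position $p$ with $p_l=c_l$ for all $l\notin\{i,j\}$ to $\psi_{i,j}(p)$ and fixes all other positions (rotation of a 2-dimensional layer; rotations of higher-dimensional layers are compositions of such moves). A combination is a finite sequence of moves, regarded as the composite permutation of $M^n$. Two positions are connected if some combination sends one to the other; connectivity classes are the resulting equivalence classes. For $x\in\{1,\dots,k-2\}$ put $\bar x=\min(x,k-1-x)$. For $1\le m\le n$ and $1\le j_1\le\dots\le j_{n-m}\le\lfloor (k-1)/2\rfloor$, $T(m;j_1,\dots,j_{n-m})$ is the set of positions $p$ with $|B(p)|=m$ such that the multiset $\{\bar p_i: i\notin B(p)\}$ equals $\{j_1,\dots,j_{n-m}\}$ (for $m=n$ the list is empty and $T$ is the set of all $p$ with $|B(p)|=n$). *)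

(* Defs.v *)
From mathcomp Require Import all_boot.
Set Implicit Arguments. Unset Strict Implicit. Unset Printing Implicit Defensive.

Section Cube.
Variables k n : nat.

(* A position p in M^n, M = {0,...,k-1}; coordinates indexed by 'I_n
   (coordinate i of the paper is index i-1 here). *)
Definition pos := {ffun 'I_n -> 'I_k}.

Definition psi (i j : 'I_n) (p : pos) : pos :=
  [ffun l => if l == i then rev_ord (p j) else if l == j then p i else p l].

(* A move: (i, j, c) with i != j; only the values c l for l \notin {i,j}
   matter. *)
Definition move := ('I_n * 'I_n * pos)%type.

Definition move_ok (mv : move) : bool := mv.1.1 != mv.1.2.

Definition apply_move (mv : move) (p : pos) : pos :=
  let: (i, j, c) := mv in
  if [forall l, ((l != i) && (l != j)) ==> (p l == c l)] then psi i j p else p.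

Definition apply_comb (s : seq move) (p : pos) : pos :=
  foldl (fun x mv => apply_move mv x) p s.

Definition connected (p q : pos) : Prop :=
  exists s : seq move, all move_ok s /\ apply_comb s p = q.

Definition Bset (p : pos) : {set 'I_n} :=
  [set i | (val (p i) == 0) || (val (p i) == k.-1)].

Definition external (p : pos) : bool := Bset p != set0.

Definition bar (x : nat) : nat := minn x (k.-1 - x).

Definition barseq (p : pos) : seq nat :=
  [seq bar (val (p i)) | i <- [seq i <- enum 'I_n | i \notin Bset p]].

Definition trivclass (m : nat) : {set pos} := [set p | #|Bset p| == m].

Definition Tset (m : nat) (js : seq nat) : {set pos} :=
  [set p | (#|Bset p| == m) && perm_eq (barseq p) js].

Definition Tparams (m : nat) (js : seq nat) : bool :=
  [&& 1 <= m <= n, size js == n - m, sorted leq js &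
      all (fun j => 1 <= j <= (k.-1)./2) js].

Definition Tspecial (m : nat) (js : seq nat) : bool :=
  [&& m == 1, sorted ltn js & all (fun j => j.*2 < k.-1) js].

End Cube.

(* Main.v *)
Require Import Defs.
From mathcomp Require Import all_boot all_fingroup zify.
Set Implicit Arguments. Unset Strict Implicit. Unset Printing Implicit Defensive.

Lemma card_count (T : finType) (P : pred T) : #|[set x | P x]| = count P (enum T).
Proof. rewrite -size_filter -(setTI [set x | P x]) cardE (perm_size (enum_setI _ _)).
rewrite enum_setT -enumT. congr size; apply: eq_filter => x; by rewrite inE. Qed.

Section Main.
Variables k n : nat.
Local Notation pos := (pos k n).
Implicit Types p q : pos.

Definition cc p c := #|[set l | bar k (p l) == c]|.

Lemma bar_rev (x : 'I_k) : bar k (rev_ord x) = bar k x.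
Proof. rewrite /bar /=. have := ltn_ord x. lia. Qed.

Lemma inB p i : (i \in Bset p) = (bar k (p i) == 0).
Proof. rewrite inE /bar /=. have := ltn_ord (p i). lia. Qed.

Definition flipf (i : 'I_n) p : pos := [ffun l => if l == i then rev_ord (p l) else p l].
Definition swapf (i j : 'I_n) p : pos := [ffun l => p (tperm i j l)].
Inductive op := Flip of 'I_n | Swap of 'I_n & 'I_n.
Definition opf o p := match o with Flip i => flipf i p | Swap i j => swapf i j p end.
Definition opodd o := match o with Flip _ => true | Swap i j => i != j end.
Definition aw (w : seq op) p := foldl (fun q o => opf o q) p w.
Definition par w := odd (count opodd w).

Lemma aw_cat w1 w2 p : aw (w1 ++ w2) p = aw w2 (aw w1 p).
Proof. by rewrite /aw foldl_cat. Qed.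

Lemma conn_refl p : connected p p.
Proof. by exists [::]. Qed.

Lemma conn_trans p q r : connected p q -> connected q r -> connected p r.
Proof.
move=> [s1 [h1 e1]] [s2 [h2 e2]]; exists (s1 ++ s2); split; first by rewrite all_cat h1 h2.
by rewrite /apply_comb foldl_cat -/(apply_comb s1 p) e1.
Qed.

Lemma rev_ordK' (x : 'I_k) : rev_ord (rev_ord x) = x.
Proof. exact: rev_ordK. Qed.

Lemma psiE i j p : psi i j p = flipf i (swapf i j p).
Proof.
apply/ffunP => l; rewrite !ffunE.
case: tpermP => [->|->|/eqP/negbTE -> /eqP/negbTE ->] //; rewrite ?eqxx //.
by case: eqP => [->|].
Qed.

Lemma conn_psi i j p : i != j -> connected p (psi i j p).
Proof.
move=> hij; exists [:: (i, j, p)]; split; first by rewrite /= andbT /move_ok.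
rewrite /apply_comb /= /apply_move.
have -> : [forall l, (l != i) && (l != j) ==> (p l == p l)] by apply/forallP => l; apply/implyP.
done.
Qed.

Lemma flipK i p : flipf i (flipf i p) = p.
Proof. apply/ffunP => l; rewrite !ffunE; case: eqP => [->|] //; by rewrite rev_ordK. Qed.

Lemma conn_ff x y r : connected r (flipf x (flipf y r)).
Proof.
case: (eqVneq x y) => [<-|hxy]; first by rewrite flipK; exact: conn_refl.
apply: conn_trans (conn_psi r hxy) _.
have -> : flipf x (flipf y r) = psi x y (psi x y r).
  have hyx := hxy; rewrite eq_sym in hyx.
  apply/ffunP => l; rewrite !ffunE.
  case: (eqVneq l x) => [->|hlx]; first by rewrite ?eqxx ?(negbTE hxy) ?(negbTE hyx).
  case: (eqVneq l y) => [->|hly]; first by rewrite ?eqxx ?(negbTE hxy) ?(negbTE hyx).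
  by [].
exact: conn_psi.
Qed.

Lemma fsf i j q : i != j -> flipf i (swapf i j (flipf j q)) = swapf i j q.
Proof.
move=> hij; apply/ffunP => l; rewrite !ffunE.
  case: (eqVneq l i) => [->|hli]; first by rewrite tpermL ?ffunE ?eqxx rev_ordK.
case: eqP => // htj.
have : tperm i j l = tperm i j i by rewrite tpermL.
by move/perm_inj => /eqP; rewrite (negbTE hli).
Qed.

Lemma swap_refl i p : swapf i i p = p.
Proof. by apply/ffunP => l; rewrite ffunE tperm1 perm1. Qed.

Lemma connW w p : if par w then forall x, connected p (flipf x (aw w p)) else connected p (aw w p).
Proof.
elim/last_ind: w => [|w o IH]; first exact: conn_refl.
rewrite /par -cats1 count_cat aw_cat /= addn0.
move: IH; rewrite /par; set q := aw w p.
case: o => [i | i j] /=.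
  rewrite addn1 /= ; case: (odd (count opodd w)) => IH /=; first exact: IH i.
  by move=> x; apply: conn_trans IH (conn_ff x i q).
case: (eqVneq i j) => [<-|hij] /=; first by rewrite addn0 swap_refl.
rewrite addn1 /=; case: (odd (count opodd w)) => IH /=.
  apply: conn_trans (IH j) _; rewrite -(fsf q hij) -psiE; exact: conn_psi.
move=> x; apply: conn_trans IH _.
apply: conn_trans (conn_psi q hij) _; rewrite psiE.
have := conn_ff x i (flipf i (swapf i j q)). by rewrite flipK.
Qed.


Lemma cc_flip i p c : cc (flipf i p) c = cc p c.
Proof. apply: eq_card => l; rewrite !inE ffunE; case: ifP => // /eqP ->; by rewrite bar_rev. Qed.

Lemma cc_swap i j p c : cc (swapf i j p) c = cc p c.
Proof.
rewrite /cc -[RHS](card_preimset _ (@perm_inj _ (tperm i j))).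
by apply: eq_card => l; rewrite !inE ffunE.
Qed.

Lemma cc_op o p c : cc (opf o p) c = cc p c.
Proof. case: o => *; [exact: cc_flip | exact: cc_swap]. Qed.

Lemma cc_aw w p c : cc (aw w p) c = cc p c.
Proof. elim: w p => [//|o w IH] p /=; by rewrite IH cc_op. Qed.

Lemma cc_move mv p c : cc (apply_move mv p) c = cc p c.
Proof. case: mv => [[i j] d] /=; case: ifP => // _; by rewrite psiE cc_flip cc_swap. Qed.

Lemma cc_conn p q c : connected p q -> cc p c = cc q c.
Proof.
move=> [s [_ <-]]; elim: s p => [//|mv s IH] p /=.
by rewrite /apply_comb /= -/(apply_comb s _) -IH cc_move.
Qed.

Lemma cardB p : #|Bset p| = cc p 0.
Proof. by apply: eq_card => l; rewrite inB inE. Qed.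

Lemma count_barseq p c : count_mem c (barseq p) = if c == 0 then 0 else cc p c.
Proof.
rewrite /barseq count_map count_filter /cc card_count.
case: eqP => [->|/eqP hc].
  by apply/eqP; rewrite -leqn0 leqNgt -has_count; apply/hasPn => l _ /=; rewrite inB; case: eqP.
apply: eq_count => l /=; rewrite inB; case: eqP => // ->; by rewrite hc.
Qed.

Lemma Tset_cc p m js : p \in Tset k n m js -> cc p 0 = m /\ forall c, c != 0 -> cc p c = count_mem c js.
Proof.
rewrite inE => /andP [/eqP hm /allP hp]; split; first by rewrite -cardB.
move=> c hc; case: (boolP (c \in barseq p ++ js)) => hin.
  by have /eqP := hp c hin; rewrite count_barseq (negbTE hc).
rewrite mem_cat negb_or in hin; case/andP: hin => h1 h2.
rewrite (count_memPn h2); move: h1; rewrite -has_pred1 has_count count_barseq (negbTE hc).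
by rewrite lt0n negbK => /eqP.
Qed.

Lemma cc_Tset p q m js : (forall c, cc p c = cc q c) -> p \in Tset k n m js -> q \in Tset k n m js.
Proof.
move=> H; rewrite !inE !cardB H => /andP [-> hp] /=.
apply: perm_trans hp; apply/allP => c _ /=; by rewrite !count_barseq H.
Qed.

Lemma Tset_of_cc p m js : all (fun j => 0 < j) js -> cc p 0 = m ->
  (forall c, c != 0 -> cc p c = count_mem c js) -> p \in Tset k n m js.
Proof.
move=> hjs h0 hc; rewrite inE cardB h0 eqxx /=.
apply/allP => c _ /=; rewrite count_barseq; case: (eqVneq c 0) => [->|h]; last by rewrite hc.
by rewrite eq_sym; apply/eqP/count_memPn; apply/negP => /(allP hjs).
Qed.

Lemma bar_eq (x y : 'I_k) : bar k x = bar k y -> x != y -> y = rev_ord x.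
Proof.
move=> hb hxy; apply: val_inj => /=; move: hb hxy; rewrite /bar -val_eqE /=.
have := ltn_ord x; have := ltn_ord y; lia.
Qed.

Lemma step_lemma p q i : i \in [set l | p l != q l] ->
  (forall p', #|[set l | p' l != q l]| < #|[set l | p l != q l]| -> (forall c, cc p' c = cc q c) -> exists w, aw w p' = q) ->
  forall w0, [set l | aw w0 p l != q l] \subset [set l | p l != q l] :\ i ->
  (forall c, cc p c = cc q c) -> exists w, aw w p = q.
Proof.
move=> hi IH w0 hsub H.
have hlt : #|[set l | aw w0 p l != q l]| < #|[set l | p l != q l]|.
  apply: leq_ltn_trans (subset_leq_card hsub) _.
  by rewrite [X in _ < X](cardsD1 i) hi.
have [w hw] := IH (aw w0 p) hlt (fun c => etrans (cc_aw _ _ _) (H c)).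
by exists (w0 ++ w); rewrite aw_cat.
Qed.

Lemma wordC p q : (forall c, cc p c = cc q c) -> exists w, aw w p = q.
Proof.
move: {2}#|_| (leqnn #|[set l | p l != q l]|) => d.
elim: d p => [|d IH] p Hd H.
  exists [::]; apply/ffunP => l /=; apply/eqP; apply: contraT => hl.
  move: Hd; rewrite leqn0 => /eqP /card0_eq /(_ l); by rewrite inE hl.
case: (pickP (fun l => p l != q l)) => [i hi | h]; last first.
  by exists [::]; apply/ffunP => l /=; apply/eqP; move/negbFE: (h l).
have hiD : i \in [set l | p l != q l] by rewrite inE.
have IH' : forall p', #|[set l | p' l != q l]| < #|[set l | p l != q l]| ->
    (forall c, cc p' c = cc q c) -> exists w, aw w p' = q.
  move=> p' hlt; apply: IH; rewrite -ltnS; exact: leq_trans hlt Hd.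
case: (eqVneq (bar k (p i)) (bar k (q i))) => hb.
  apply: (step_lemma hiD IH' (w0 := [:: Flip i])) H.
  apply/subsetP => l; rewrite !inE /= ffunE.
  case: (eqVneq l i) => [->|hli] //=; by rewrite -(bar_eq hb hi) eqxx.
have [j /andP [hj1 hj2]] : exists j, (bar k (p j) == bar k (q i)) && (p j != q j).
  apply/existsP; apply: contraT; rewrite negb_exists => /forallP hall.
  have : cc p (bar k (q i)) < cc q (bar k (q i)).
    have hsub : [set l | bar k (p l) == bar k (q i)] \subset [set l | bar k (q l) == bar k (q i)] :\ i.
      apply/subsetP => l; rewrite !inE => hl.
      have := hall l; rewrite hl /= negbK => /eqP hpq.
      rewrite -hpq hl andbT; apply: contraTneq hl => ->; exact: hb.
    apply: leq_ltn_trans (subset_leq_card hsub) _.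
    by rewrite /cc [X in _ < X](cardsD1 i) !inE eqxx.
  by rewrite H ltnn.
have hji : j != i by apply: contraTneq hj1 => ->; exact: hb.
set p1 := swapf i j p.
have hp1i : p1 i = p j by rewrite ffunE tpermL.
case: (eqVneq (p j) (q i)) => hpq.
  apply: (step_lemma hiD IH' (w0 := [:: Swap i j])) H.
  apply/subsetP => l; rewrite !inE /= -/p1.
  case: (eqVneq l i) => [->|hli] /=; first by rewrite hp1i hpq eqxx.
  rewrite ffunE; case: tpermP => [hl|hl|_ _]; [by rewrite hl eqxx in hli | by rewrite hl hj2 | by []].
apply: (step_lemma hiD IH' (w0 := [:: Swap i j; Flip i])) H.
apply/subsetP => l; rewrite !inE /= -/p1 ffunE.
case: (eqVneq l i) => [->|hli] /=.
  by rewrite hp1i -(bar_eq (eqP hj1) hpq) eqxx.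
rewrite ffunE; case: tpermP => [hl|hl|_ _]; [by rewrite hl eqxx in hli | by rewrite hl hj2 | by []].
Qed.


Lemma stab1 p i : (bar k (p i)).*2 = k.-1 -> exists w, par w /\ aw w p = p.
Proof.
move=> h; exists [:: Flip i]; split => //=.
apply/ffunP => l; rewrite ffunE; case: eqP => // ->.
apply: val_inj => /=; move: h; rewrite /bar; have := ltn_ord (p i); lia.
Qed.

Lemma stab2 p i j : i != j -> bar k (p i) = bar k (p j) -> exists w, par w /\ aw w p = p.
Proof.
move=> hij hb; have hji := hij; rewrite eq_sym in hji.
case: (eqVneq (p i) (p j)) => he.
  exists [:: Swap i j]; split; first by rewrite /par /= hij.
  apply/ffunP => l /=; rewrite ffunE; case: tpermP => [->|->|] //.
exists [:: Flip i; Flip j; Swap i j]; split; first by rewrite /par /= hij.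
have e := bar_eq hb he.
apply/ffunP => l /=; rewrite !ffunE.
case: tpermP => [->|->|/eqP/negbTE-> /eqP/negbTE->];
  rewrite ?eqxx ?(negbTE hij) ?(negbTE hji) ?e ?rev_ordK //.
Qed.

Lemma cc2 p c : 1 < cc p c -> exists i j, [/\ i != j, bar k (p i) = c & bar k (p j) = c].
Proof.
rewrite /cc => h.
have /card_gt0P [i hi] : 0 < #|[set l | bar k (p l) == c]| by apply: ltnW.
move: h; rewrite (cardsD1 i) hi add1n ltnS => /card_gt0P [j]; rewrite !inE => /andP [hji /eqP hj].
exists i, j; split => //; [by rewrite eq_sym | by move: hi; rewrite inE => /eqP].
Qed.

Lemma not_uniq_count (s : seq nat) : ~~ uniq s -> exists x, 1 < count_mem x s.
Proof.
elim: s => [//|y s IH] /=; rewrite negb_and negbK => /orP [hy|/IH [x hx]].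
  exists y; rewrite eqxx add1n ltnS; by rewrite -has_pred1 has_count in hy.
by exists x; apply: leq_trans hx (leq_addl _ _).
Qed.

Lemma stab_T p m js : Tparams k n m js -> ~~ Tspecial k m js -> p \in Tset k n m js ->
  exists w, par w /\ aw w p = p.
Proof.
move=> /and4P [/andP [hm1 hmn] _ hsort hall] hns hp.
have [h0 hc] := Tset_cc hp.
have fromcc : forall c, 1 < cc p c -> exists w, par w /\ aw w p = p.
  by move=> c /cc2 [i [j [hij hi hj]]]; apply: (stab2 hij); rewrite hi hj.
case: (ltnP 1 m) => hm; first by apply: (fromcc 0); rewrite h0.
have m1 : m = 1 by apply/eqP; rewrite eqn_leq hm hm1.
move: hns; rewrite /Tspecial m1 eqxx /= negb_and => /orP [].
  rewrite ltn_sorted_uniq_leq hsort andbT => /not_uniq_count [x hx].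
  have hx0 : x != 0.
    have : x \in js by rewrite -has_pred1 has_count; exact: ltnW hx.
    by move/(allP hall) => /andP [+ _]; rewrite lt0n.
  by apply: (fromcc x); rewrite hc.
move=> /allPn [j hj hj2].
have /andP [hj0 hjk] := allP hall j hj.
have : 0 < cc p j by rewrite hc -?lt0n // -has_count has_pred1.
move/card_gt0P => [i]; rewrite inE => /eqP hi.
apply: (stab1 (i := i)); rewrite hi; move: hj2 hjk; lia.
Qed.

Definition wit (b : 'I_k) m js : pos :=
  [ffun i : 'I_n => if val i < m then b else insubd b (nth 0 js (val i - m))].

Lemma bar_small j : j.*2 <= k.-1 -> bar k j = j.
Proof. rewrite /bar; lia. Qed.

Lemma count_const (T : Type) (b : bool) (s : seq T) : count (fun _ => b) s = b * size s.
Proof. elim: s => [|x s IH] /=; [by rewrite muln0 | rewrite IH; move: IH; case: b => /= _; lia]. Qed.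

Lemma wit_cc (b : 'I_k) m js : bar k b = 0 -> m <= n -> size js = n - m ->
  all (fun j => 0 < j <= (k.-1)./2) js ->
  forall c, cc (wit b m js) c = (c == 0) * m + count_mem c js.
Proof.
move=> hb hmn hs hall c.
have hnth : forall t, t < size js -> nth 0 js t < k /\ bar k (nth 0 js t) = nth 0 js t.
  move=> t ht; have /andP [h1 h2] := allP hall _ (mem_nth 0 ht).
  rewrite geq_half_double in h2.
  move: h1 h2; set x := nth 0 js t => h1 h2.
  split; first lia.
  apply: bar_small; lia.
pose P := fun x => bar k (if x < m then val b else nth 0 js (x - m)) == c.
rewrite /cc card_count.
rewrite (eq_count (a2 := fun t : 'I_n => P (val t))); last first.
  move=> t /=; rewrite /P ffunE; case: ifP => // ht.
  have htn : val t < n by exact: ltn_ord.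
  move/negbT: ht; rewrite -leqNgt => ht.
  have ht' : val t - m < size js by rewrite hs; move: ht htn; lia.
  by rewrite val_insubd (hnth _ ht').1.
have -> : count (fun t : 'I_n => P (val t)) (enum 'I_n) = count P (map val (enum 'I_n)) by rewrite count_map.
rewrite val_enum_ord -(subnKC hmn) iotaD count_cat add0n.
rewrite [count P (iota 0 m)](eq_in_count (a2 := fun _ => 0 == c)); last first.
  by move=> t; rewrite mem_iota add0n => /andP [_ ht]; rewrite /P ht hb.
rewrite count_const size_iota eq_sym.
have -> : iota m (n - m) = map (addn m) (iota 0 (n - m)) by rewrite -iotaDl addn0.
rewrite count_map [count _ (iota 0 (n - m))](eq_in_count (a2 := fun t => nth 0 js t == c)); last first.
  move=> t; rewrite mem_iota add0n => ht /=; rewrite /P.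
  have -> : (m + t < m) = false by lia.
  have -> : m + t - m = t by lia.
  by rewrite (hnth t _).2 // hs.
have -> : count (fun t => nth 0 js t == c) (iota 0 (n - m)) = count_mem c (map (nth 0 js) (iota 0 (n - m))) by rewrite count_map.
by rewrite -hs map_nth_iota0 // take_size.
Qed.

Lemma wit_T (b : 'I_k) m js : bar k b = 0 -> Tparams k n m js -> wit b m js \in Tset k n m js.
Proof.
move=> hb /and4P [/andP [hm1 hmn] /eqP hs _ hall].
have hc := wit_cc hb hmn hs hall.
apply: Tset_of_cc.
- by apply/allP => j /(allP hall) /andP [].
- by rewrite hc eqxx mul1n (count_memPn _) ?addn0 //; apply/negP => /(allP hall).
- by move=> c hc0; rewrite hc (negbTE hc0).
Qed.

Definition rk (f : 'I_n -> nat) (a : 'I_n) := #|[set b | f b < f a]|.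
Definition oddrk (f : 'I_n -> nat) :=
  if [pick s : {perm 'I_n} | [forall a, val (s a) == rk f a]] is Some s then odd_perm s else false.
Definition high (x : nat) := k.-1 - x < x.
Definition Inv p := oddrk (fun l => bar k (p l)) (+) odd #|[set l | high (p l)]|.

Lemma rk_lt f a : rk f a < n.
Proof.
rewrite /rk.
have : [set b | f b < f a] \subset [set: 'I_n] :\ a.
  by apply/subsetP => b; rewrite !inE andbT; apply: contraTneq => ->; rewrite ltnn.
move/subset_leq_card; have := cardsD1 a [set: 'I_n]; rewrite cardsT card_ord in_setT /= => e h; apply: (leq_ltn_trans h); by rewrite [X in _ < X]e add1n.
Qed.

Lemma rk_mono f a b : f a < f b -> rk f a < rk f b.
Proof.
move=> hab; rewrite /rk; apply: proper_card; apply/properP; split.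
  by apply/subsetP => x; rewrite !inE => h; exact: ltn_trans h hab.
by exists a; rewrite !inE ?ltnn.
Qed.

Lemma rk_inj f : injective f -> injective (rk f).
Proof.
move=> fi a b h; apply: fi; case: (ltngtP (f a) (f b)) => // hab.
  by have := rk_mono hab; rewrite h ltnn.
by have := rk_mono hab; rewrite h ltnn.
Qed.

Lemma rk_perm f : injective f -> exists s : {perm 'I_n}, forall a, val (s a) = rk f a.
Proof.
move=> fi; pose g a := Ordinal (rk_lt f a).
have gi : injective g by move=> a b /(congr1 val) /= /(rk_inj fi).
by exists (perm gi) => a; rewrite permE.
Qed.

Lemma oddrkE f (s : {perm 'I_n}) : (forall a, val (s a) = rk f a) -> oddrk f = odd_perm s.
Proof.
move=> hs; rewrite /oddrk; case: pickP => [s' /forallP hs'| /(_ s)].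
  congr odd_perm; apply/permP => a; apply: val_inj; rewrite hs; exact/eqP.
have -> : [forall a, val (s a) == rk f a] by apply/forallP => a; rewrite hs.
done.
Qed.

Lemma oddrk_ext f g : f =1 g -> oddrk f = oddrk g.
Proof.
move=> e; rewrite /oddrk (eq_pick (Q := fun s : {perm 'I_n} => [forall a, val (s a) == rk g a])) //.
move=> s /=; apply: eq_forallb => a; congr (_ == _); apply: eq_card => b; by rewrite !inE !e.
Qed.

Lemma oddrk_swap f i j : injective f -> oddrk (fun l => f (tperm i j l)) = (i != j) (+) oddrk f.
Proof.
move=> fi; have [s hs] := rk_perm fi.
have hs' : forall a, val ((tperm i j * s)%g a) = rk (fun l => f (tperm i j l)) a.
  move=> a; rewrite permM hs /rk -(card_preimset [set b | f b < f (tperm i j a)] (@perm_inj _ (tperm i j))).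
  by apply: eq_card => b; rewrite !inE.
by rewrite (oddrkE hs) (oddrkE hs') odd_mul_tperm.
Qed.

Definition good p := (forall c, cc p c <= 1) /\ (forall c, c.*2 = k.-1 -> cc p c = 0).

Lemma good_cc p q : (forall c, cc p c = cc q c) -> good p -> good q.
Proof. move=> e [h1 h2]; split => c; rewrite -e; [exact: h1 | exact: h2]. Qed.

Lemma good_inj p : good p -> injective (fun l => bar k (p l)).
Proof.
move=> [h _] a b hab; have := h (bar k (p a)); move/card_le1_eqP => H.
by apply: (H b a); rewrite inE ?hab.
Qed.

Lemma good_nomid p l : good p -> (bar k (p l)).*2 != k.-1.
Proof.
move=> [_ h]; apply/eqP => e; have := h _ e.
have : 0 < cc p (bar k (p l)) by apply/card_gt0P; exists l; rewrite inE.
by move=> h1 h2; rewrite h2 in h1.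
Qed.

Lemma high_flip (x : 'I_k) : (bar k x).*2 != k.-1 -> high (rev_ord x) = ~~ high x.
Proof. rewrite /high /bar /=; have := ltn_ord x; lia. Qed.

Lemma oddH_flip p i : (bar k (p i)).*2 != k.-1 ->
  odd #|[set l | high (flipf i p l)]| = ~~ odd #|[set l | high (p l)]|.
Proof.
move=> h.
have e : [set l | high (flipf i p l)] :\ i = [set l | high (p l)] :\ i.
  by apply/setP => l; rewrite !inE ffunE; case: eqP => //=.
rewrite (cardsD1 i [set l | high (flipf i p l)]) e (cardsD1 i [set l | high (p l)]) !inE ffunE eqxx high_flip //.
by case: (high (p i)); rewrite /= ?negbK.
Qed.

Lemma Inv_flip p i : (bar k (p i)).*2 != k.-1 -> Inv (flipf i p) = ~~ Inv p.
Proof.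
move=> h; rewrite /Inv oddH_flip // (oddrk_ext (g := fun l => bar k (p l))).
  by case: (oddrk _); case: (odd _).
by move=> l; rewrite ffunE; case: ifP => _ //; exact: bar_rev.
Qed.

Lemma Inv_move mv p : good p -> move_ok mv -> Inv (apply_move mv p) = Inv p.
Proof.
case: mv => [[i j] d] hg /=; rewrite /move_ok /= => hij; case: ifP => // _.
rewrite psiE /Inv.
rewrite (oddrk_ext (g := fun l => bar k (p (tperm i j l)))); last first.
  by move=> l; rewrite ffunE; case: ifP => _; rewrite ?bar_rev ffunE.
have := oddrk_swap i j (good_inj hg); rewrite /= => ->.
rewrite oddH_flip; last by rewrite ffunE tpermL; exact: good_nomid.
have -> : #|[set l | high (swapf i j p l)]| = #|[set l | high (p l)]|.
  rewrite -[RHS](card_preimset _ (@perm_inj _ (tperm i j))).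
  by apply: eq_card => l; rewrite !inE ffunE.
by rewrite hij; case: (oddrk _); case: (odd _).
Qed.

Lemma Inv_conn p q : good p -> connected p q -> Inv p = Inv q.
Proof.
move=> hg [s [hs <-]]; elim: s p hg hs => [//|mv s IH] p hg /= /andP [hmv hs].
rewrite /apply_comb /= -/(apply_comb s _) -IH //; first by rewrite Inv_move.
by apply: good_cc hg => c; rewrite cc_move.
Qed.

Lemma good_T p js : 1 < k -> Tspecial k 1 js -> p \in Tset k n 1 js -> good p.
Proof.
move=> hk /and3P [_ hlt hall] hp; have [h0 hc] := Tset_cc hp.
have hu : uniq js by move: hlt; rewrite ltn_sorted_uniq_leq => /andP [].
split => c.
  case: (eqVneq c 0) => [->|hc0]; first by rewrite h0.
  by rewrite hc // count_uniq_mem // leq_b1.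
move=> hc2; case: (eqVneq c 0) => [hc0|hc0]; first by move: hc2; rewrite hc0; lia.
rewrite hc //; apply/count_memPn; apply/negP => /(allP hall) /=; by rewrite hc2 ltnn.
Qed.

Lemma sorted_ltn_nth (s : seq nat) a : sorted ltn s -> all (fun j => a <= j) s ->
  forall t, t < size s -> a + t <= nth 0 s t.
Proof.
elim: s a => [//|x s IH] a /= hs /andP [hx hall] [|t] ht /=; first by rewrite addn0.
have hs' := path_sorted hs.
have hall' : all (fun j => a.+1 <= j) s.
  apply/allP => y hy; have := order_path_min ltn_trans hs; move/allP/(_ y hy) => hxy.
  exact: leq_ltn_trans hx hxy.
rewrite addnS -addSn; exact: IH.
Qed.

End Main.

Unset Implicit Arguments.

Theorem mainTheorem1 (k n : nat) (hk : 2 <= k) (hn : 3 <= n) :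
  ((forall p : pos k n, exists! m : 'I_n.+1, p \in trivclass k n m) /\
   (forall p q : pos k n, connected p q -> #|Bset p| = #|Bset q|)) /\
  (forall p : pos k n, external p ->
     exists m js, Tparams k n m js /\ p \in Tset k n m js) /\
  (forall m js m' js' (p : pos k n), Tparams k n m js -> Tparams k n m' js' ->
     p \in Tset k n m js -> p \in Tset k n m' js' -> m = m' /\ js = js') /\
  (forall m js, Tparams k n m js -> ~~ Tspecial k m js ->
     exists p : pos k n, forall q, q \in Tset k n m js <-> connected p q) /\
  (forall m js, Tparams k n m js -> Tspecial k m js ->
     forall p0 p1 : pos k n,
       (forall i : 'I_n, val (p0 i) = if val i == 0 then 0 else nth 0 js (val i).-1) ->
       (forall i : 'I_n, val (p1 i) = if val i == 0 then k.-1 else nth 0 js (val i).-1) ->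
       (forall q, q \in Tset k n m js <-> connected p0 q \/ connected p1 q) /\
       (forall q, ~ (connected p0 q /\ connected p1 q))) /\
  (forall js : seq nat, size js = n.-1 -> sorted ltn js ->
     all (fun j => 1 <= j) js -> all (fun j => j.*2 < k.-1) js -> n.*2 <= k).
Proof.
have n0 : 0 < n by lia.
pose i0 : 'I_n := Ordinal n0.
have k0 : 0 < k by lia.
pose b0 : 'I_k := Ordinal k0.
have hb0 : bar k b0 = 0 by rewrite /bar /= min0n.
have Tcc : forall m js (p q : pos k n), p \in Tset k n m js -> q \in Tset k n m js -> forall c, cc p c = cc q c.
  move=> m js p q hp hq c; have [hp0 hpc] := Tset_cc hp; have [hq0 hqc] := Tset_cc hq.
  by case: (eqVneq c 0) => [->|hc]; [rewrite hp0 hq0 | rewrite hpc // hqc].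
split; [split|split; [|split; [|split; [|split]]]].
- move=> p; have hle : #|Bset p| < n.+1 by rewrite ltnS; apply: leq_trans (max_card _) _; rewrite card_ord.
  exists (Ordinal hle); split; first by rewrite inE.
  by move=> y; rewrite inE => /eqP h; apply: val_inj => /=.
- by move=> p q h; rewrite !cardB; exact: cc_conn.
- move=> p hext; exists #|Bset p|, (sort leq (barseq p)); split; last first.
    by rewrite inE eqxx /= perm_sym perm_sort.
  apply/and4P; split.
  + apply/andP; split; first by rewrite card_gt0; exact: hext.
    by rewrite -[X in _ <= X]card_ord max_card.
  + rewrite size_sort size_map size_filter -card_count.
    have -> : [set x | x \notin Bset p] = ~: Bset p by apply/setP => x; rewrite !inE.
    have := cardsC (Bset p); rewrite card_ord => e.
    rewrite -(eqn_add2l #|Bset p|) e subnKC //; rewrite -[X in _ <= X]card_ord; exact: max_card.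
  + exact: (sort_sorted leq_total).
  + apply/allP => j; rewrite mem_sort => /mapP [i]; rewrite mem_filter => /andP [hi _] ->.
    rewrite inB in hi; rewrite geq_half_double; move: hi; rewrite /bar.
    case: (p i) => x hx /=; lia.
- move=> m js m' js' p /and4P [_ _ hs _] /and4P [_ _ hs' _].
  rewrite !inE => /andP [/eqP h1 h2] /andP [/eqP h1' h2'].
  split; first by rewrite -h1 -h1'.
  apply: (sorted_eq leq_trans anti_leq) => //; rewrite perm_sym in h2; exact: perm_trans h2 h2'.
- move=> m js hT hns.
  have hw := wit_T hb0 hT.
  exists (wit n b0 m js) => q; split; last first.
    by move=> hc; apply: cc_Tset hw => c; exact: cc_conn.
  move=> hq; have [w1 hw1] := wordC (Tcc _ _ _ _ hw hq).
  have := connW w1 (wit n b0 m js); case hp: (par w1) => H; last by rewrite hw1 in H.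
  have [o [ho hoe]] := stab_T hT hns hw.
  have := connW (o ++ w1) (wit n b0 m js).
  have -> : par (o ++ w1) = false by move: ho hp; rewrite /par count_cat oddD => -> ->.
  by rewrite aw_cat hoe hw1.
- move=> m js hT hsp p0 p1 h0 h1.
  move: (hsp) => /and3P [/eqP hm _ _]; subst m.
  have hnth : forall t, nth 0 js t < k.
    move=> t; case: (ltnP t (size js)) => ht; last by rewrite nth_default.
    move: hT => /and4P [_ _ _ /allP hall]; have /andP [_ h2] := hall _ (mem_nth 0 ht).
    move: h2; rewrite geq_half_double; set x := nth 0 js t; move: x => x; lia.
  have e0 : p0 = wit n b0 1 js.
    apply/ffunP => i; apply: val_inj; rewrite h0 ffunE.
    case: i => [[|i] hi] //=; by rewrite val_insubd hnth subn1.
  have e1 : p1 = flipf i0 p0.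
    apply/ffunP => i; apply: val_inj; rewrite ffunE h1.
    case: (eqVneq i i0) => [->|hne] /=; first by rewrite h0 /=; lia.
    rewrite h0 /=; case: eqP => // hi; case/eqP: hne; exact: val_inj.
  have hp0 : p0 \in Tset k n 1 js by rewrite e0; exact: wit_T.
  have hp1 : p1 \in Tset k n 1 js by rewrite e1; apply: cc_Tset hp0 => c; rewrite cc_flip.
  have hgood : good p0 := good_T hk hsp hp0.
  have hmid : (bar k (p0 i0)).*2 != k.-1 by rewrite /bar h0 /=; lia.
  split.
  + move=> q; split; last first.
      by case=> hc; [apply: cc_Tset hp0 | apply: cc_Tset hp1] => c; exact: cc_conn.
    move=> hq; have [w hw] := wordC (Tcc _ _ _ _ hp0 hq).
    have := connW w p0; case hp: (par w) => H; last by left; rewrite hw in H.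
    right; have := connW (Flip i0 :: w) p1.
    have -> : par (Flip i0 :: w) = false by move: hp; rewrite /par /= => ->.
    by rewrite /aw /= -/(aw w _) e1 flipK hw.
  + move=> q [c0 c1].
    have hgood1 : good p1 by apply: good_cc hgood => c; rewrite e1 cc_flip.
    have H0 := Inv_conn hgood c0; have H1 := Inv_conn hgood1 c1.
    move: H1; rewrite -H0 e1 Inv_flip //; by case: (Inv p0).
- move=> js hs hlt hall1 hall2.
  have ht : n.-2 < size js by rewrite hs; lia.
  have := sorted_ltn_nth hlt hall1 ht.
  have := allP hall2 _ (mem_nth 0 ht); rewrite /=; set x := nth 0 js n.-2; move: x => x; lia.
Qed.
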